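(* Let $A_1$ and $A_2$ be finite alphabets, each with at least two symbols, and give $A_1^*$ and $A_2^*$ their standard self-similar structures. Then a homeomorphism $f\colon A_1^\omega\to A_2^\omega$ is rational in the self-similar-tree sense if and only if it is computed by a nondegenerate asynchronous transducer with input alphabet $A_1$ and output alphabet $A_2$.
   Context: For a finite alphabet $A$, $A^*$ is the rooted tree of finite words, rooted at the empty word, with an edge from $w$ to $wa$ for each $a\in A$; its boundary is identified with $A^\omega$. Its standard self-similar structure has a single vertex type, and for words $\alpha,\beta$ exactly one morphism $A^*_\alpha\to A^*_\beta$, namely the prefix replacement $\alpha\gamma\mapsto\beta\gamma$; here $A^*_\alpha$ is the subtree of words with prefix $\alpha$. For self-similar trees $T,T'$, a homeomorphism $f\colon\partial T\to\partial T'$ has equivalent restrictions at same-type vertices $v,w$ of $T$ if there exist same-type vertices $x,y$ of $T'$ and morphisms $\varphi\colon T_v\to T_w$, $\psi\colon T'_x\to T'_y$ such that $f(\partial T_v)\subseteq\partial T'_x$, $f(\partial T_w)\subseteq\partial T'_y$ and $f\circ\varphi_*=\psi_*\circ f$ on $\partial T_v$, where $\varphi_*,\psi_*$ are the induced boundary homeomorphisms. $f$ is rational in the self-similar-tree sense if this equivalence relation on the vertices of $T$ has finitely many classes. A transducer with input alphabet $A_1$ and output alphabet $A_2$ has finitely many states, an initial state, a transition function $Q\times A_1\to Q$ and an output function $Q\times A_1\to A_2^*$ (finite, possibly empty, words). It is nondegenerate if the concatenated output on every infinite input is infinite. *)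

(* Defs.v *)
From mathcomp Require Import all_boot.
Set Implicit Arguments. Unset Strict Implicit. Unset Printing Implicit Defensive.

(* Infinite words over A (boundary A^omega of the tree A^* ) are maps nat -> A;
   finite words (vertices of A^* ) are seq A.  Equality of infinite words is
   taken pointwise. *)

Fixpoint prep (A : Type) (v : seq A) (g : nat -> A) : nat -> A :=
  match v with
  | [::] => g
  | a :: v' => fun i => match i with 0 => a | i'.+1 => prep v' g i' end
  end.

Definition agree_upto (A : Type) (n : nat) (x y : nat -> A) : Prop :=
  forall i, i < n -> x i = y i.

Definition cont_omega (A B : Type) (f : (nat -> A) -> (nat -> B)) : Prop :=
  forall x n, exists m, forall y, agree_upto m x y -> agree_upto n (f x) (f y).

Definition homeo_omega (A B : Type) (f : (nat -> A) -> (nat -> B)) : Prop :=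
  exists g : (nat -> B) -> (nat -> A),
    cont_omega f /\ cont_omega g /\
    (forall x i, g (f x) i = x i) /\ (forall y i, f (g y) i = y i).

(* Equivalent restrictions at vertices v, w of A1^* (standard self-similar
   structure: the unique morphisms are prefix replacements). *)
Definition equiv_restr (A1 A2 : Type) (f : (nat -> A1) -> (nat -> A2))
    (v w : seq A1) : Prop :=
  exists (x y : seq A2),
    forall gamma : nat -> A1, exists delta : nat -> A2,
      (forall i, f (prep v gamma) i = prep x delta i) /\
      (forall i, f (prep w gamma) i = prep y delta i).

(* Rational in the self-similar-tree sense: the equivalence relation
   equiv_restr f on the vertices of A1^* has finitely many classes, i.e.
   there is a finite list of representatives meeting every class. *)
Definition ss_rational (A1 : eqType) (A2 : Type) (f : (nat -> A1) -> (nat -> A2)) : Prop :=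
  exists reps : seq (seq A1),
    forall v : seq A1, exists2 r, r \in reps & equiv_restr f v r.

Record transducer (A1 A2 : Type) (Q : finType) := Transducer {
  tr_init : Q;
  tr_next : Q -> A1 -> Q;
  tr_out  : Q -> A1 -> seq A2 }.

Fixpoint run_out (A1 A2 : Type) (Q : finType) (T : transducer A1 A2 Q)
    (q : Q) (x : nat -> A1) (n : nat) : seq A2 :=
  match n with
  | 0 => [::]
  | n'.+1 => tr_out T q (x 0) ++ run_out T (tr_next T q (x 0)) (fun i => x i.+1) n'
  end.

Definition nondegenerate (A1 A2 : Type) (Q : finType) (T : transducer A1 A2 Q) : Prop :=
  forall (x : nat -> A1) (N : nat), exists n, N <= size (run_out T (tr_init T) x n).

(* T computes f: the concatenated output on input x is f x
   (every finite output prefix is a prefix of f x; with nondegeneracy this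
   says the infinite concatenated output equals f x). *)
Definition computes (A1 A2 : Type) (Q : finType) (T : transducer A1 A2 Q)
    (f : (nat -> A1) -> (nat -> A2)) : Prop :=
  forall (x : nat -> A1) (n i : nat),
    i < size (run_out T (tr_init T) x n) ->
    nth (f x i) (run_out T (tr_init T) x n) i = f x i.

(* Main.v *)
Require Import Defs.
From mathcomp Require Import all_boot.
From Stdlib Require Import Classical ClassicalEpsilon FunctionalExtensionality.
Set Implicit Arguments. Unset Strict Implicit.

Lemma prep_cat (A : Type) (u w : seq A) g : prep (u ++ w) g = prep u (prep w g).
Proof. by elim: u => //= a u ->. Qed.

Lemma prep_lt (A : Type) (u : seq A) g i d : i < size u -> prep u g i = nth d u i.
Proof. by elim: u i => //= a u IH [|i] //= /IH. Qed.

Lemma prep_ge (A : Type) (u : seq A) g k : prep u g (size u + k) = g k.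
Proof. by elim: u => //= a u IH. Qed.

Lemma prep_ge' (A : Type) (u : seq A) g i : size u <= i -> prep u g i = g (i - size u).
Proof. move=> h; rewrite -{1}(subnKC h); exact: prep_ge. Qed.

Fixpoint wout (A1 A2 : Type) (Q : finType) (T : transducer A1 A2 Q) q (v : seq A1) : seq A2 :=
  match v with [::] => [::] | a :: v' => tr_out T q a ++ wout T (tr_next T q a) v' end.
Fixpoint wst (A1 A2 : Type) (Q : finType) (T : transducer A1 A2 Q) q (v : seq A1) : Q :=
  match v with [::] => q | a :: v' => wst T (tr_next T q a) v' end.

Lemma run_out_prep (A1 A2 : Type) (Q : finType) (T : transducer A1 A2 Q) q v g m :
  run_out T q (prep v g) (size v + m) = wout T q v ++ run_out T (wst T q v) g m.
Proof. by elim: v q => //= a v IH q; rewrite IH catA. Qed.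

Lemma run_out_mono (A1 A2 : Type) (Q : finType) (T : transducer A1 A2 Q) q x n p :
  size (run_out T q x n) <= size (run_out T q x (n + p)).
Proof.
elim: n q x => //= n IH q x; rewrite !size_cat leq_add2l; exact: IH.
Qed.

Lemma back_dir (A1 A2 : finType) (f : (nat -> A1) -> (nat -> A2)) (Q : finType)
  (T : transducer A1 A2 Q) : nondegenerate T -> computes T f -> ss_rational f.
Proof.
move=> hnd hc.
have key : forall v w, wst T (tr_init T) v = wst T (tr_init T) w -> equiv_restr f v w.
  move=> v w hvw; exists (wout T (tr_init T) v), (wout T (tr_init T) w) => g.
  set x := wout T (tr_init T) v; set y := wout T (tr_init T) w.
  exists (fun i => f (prep v g) (size x + i)).
  have pre : forall u i, i < size (wout T (tr_init T) u) ->
      f (prep u g) i = nth (f (prep u g) i) (wout T (tr_init T) u) i.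
    move=> u i hi.
    have hcu : run_out T (tr_init T) (prep u g) (size u) = wout T (tr_init T) u.
      by rewrite -[size u]addn0 run_out_prep /= cats0.
    by rewrite -hcu hc // hcu.
  split=> i.
    case: (ltnP i (size x)) => hi.
      by rewrite (@prep_lt _ _ _ _ (f (prep v g) i) hi) -pre.
    by rewrite prep_ge' // subnKC.
  case: (ltnP i (size y)) => hi.
    by rewrite (@prep_lt _ _ _ _ (f (prep w g) i) hi) -pre.
  rewrite prep_ge'; last by [].
  set k := i - size y.
  have [n hn] := hnd (prep v g) (size x + k).+1.
  have hn' := leq_trans hn (run_out_mono T (tr_init T) (prep v g) n (size v)).
  rewrite [n + _]addnC run_out_prep size_cat -/x ltn_add2l in hn'.
  rewrite -(hc (prep v g) (size v + n)); last first.
    by rewrite run_out_prep size_cat -/x ltn_add2l.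
  rewrite -{1}(subnKC hi) -/k -(hc (prep w g) (size w + n)); last first.
    by rewrite run_out_prep size_cat -/y ltn_add2l -hvw.
  rewrite !run_out_prep !nth_cat -/x -/y !ltnNge !leq_addr /= !addKn hvw.
  by apply: set_nth_default; rewrite -hvw.
pose wr q := match excluded_middle_informative (exists v, wst T (tr_init T) v = q) with
  | left H => proj1_sig (constructive_indefinite_description _ H) | right _ => [::] end.
exists [seq wr q | q <- enum Q] => v.
exists (wr (wst T (tr_init T) v)); first by rewrite map_f // mem_enum.
apply: key; rewrite /wr; case: excluded_middle_informative => [H|[]]; last by exists v.
by case: constructive_indefinite_description.
Qed.
From mathcomp Require Import zify.

Definition Dd (A1 A2 : Type) (f : (nat -> A1) -> (nat -> A2)) (v : seq A1) n :=
  forall g g' : nat -> A1, agree_upto n (f (prep v g)) (f (prep v g')).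

Definition Lf (A1 A2 : Type) (f : (nat -> A1) -> (nat -> A2)) (v : seq A1) : nat :=
  match excluded_middle_informative (exists n, Dd f v n /\ ~ Dd f v n.+1) with
  | left H => proj1_sig (constructive_indefinite_description _ H) | right _ => 0 end.

Definition seg (A1 A2 : Type) (f : (nat -> A1) -> (nat -> A2)) (c : nat -> A1) v u :=
  [seq f (prep (v ++ u) c) i | i <- iota (Lf f v) (Lf f (v ++ u) - Lf f v)].

Lemma Dd_down (A1 A2 : Type) (f : (nat -> A1) -> (nat -> A2)) v m n :
  m <= n -> Dd f v n -> Dd f v m.
Proof. by move=> hmn h g g' i hi; apply: h; exact: leq_trans hmn. Qed.

Lemma Lf_spec (A1 A2 : Type) (f : (nat -> A1) -> (nat -> A2)) v :
  (exists n, Dd f v n /\ ~ Dd f v n.+1) -> Dd f v (Lf f v) /\ ~ Dd f v (Lf f v).+1.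
Proof.
move=> Hex; rewrite /Lf; case: excluded_middle_informative => // H.
by case: constructive_indefinite_description.
Qed.

Lemma Lf_ge (A1 A2 : Type) (f : (nat -> A1) -> (nat -> A2)) v N :
  (exists n, Dd f v n /\ ~ Dd f v n.+1) -> Dd f v N -> N <= Lf f v.
Proof.
move=> /Lf_spec [h1 h2] hN; rewrite leqNgt; apply/negP => hlt.
by apply: h2; apply: Dd_down hN.
Qed.

Lemma Lf_eq (A1 A2 : Type) (f : (nat -> A1) -> (nat -> A2)) v n :
  Dd f v n -> ~ Dd f v n.+1 -> Lf f v = n.
Proof.
move=> h1 h2.
have Hex : exists n, Dd f v n /\ ~ Dd f v n.+1 by exists n.
have [l1 l2] := Lf_spec Hex.
apply/eqP; rewrite eqn_leq; apply/andP; split; last exact: Lf_ge.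
rewrite leqNgt; apply/negP => hlt; apply: h2; exact: Dd_down l1.
Qed.

Lemma Dd_app (A1 A2 : Type) (f : (nat -> A1) -> (nat -> A2)) v u n :
  Dd f v n -> Dd f (v ++ u) n.
Proof. by move=> h g g'; rewrite !prep_cat; apply: h. Qed.

Lemma agree_prep (A : Type) (F F' d d' : nat -> A) (x : seq A) m :
  (forall i, F i = prep x d i) -> (forall i, F' i = prep x d' i) ->
  (agree_upto (size x + m) F F' <-> agree_upto m d d').
Proof.
move=> hF hF'; split.
  move=> h j hj; move: (h (size x + j)); rewrite ltn_add2l hF hF' !prep_ge; exact.
move=> h i hi; rewrite hF hF'.
case: (ltnP i (size x)) => hix.
  by rewrite !(@prep_lt _ _ _ _ (d 0) hix).
rewrite !prep_ge' //; apply: h; by rewrite ltn_subLR.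
Qed.

Lemma E1 (A1 A2 : Type) (f : (nat -> A1) -> (nat -> A2)) v w (x y : seq A2) :
  (forall v, exists n, Dd f v n /\ ~ Dd f v n.+1) ->
  (forall g : nat -> A1, exists d : nat -> A2,
      (forall i, f (prep v g) i = prep x d i) /\ (forall i, f (prep w g) i = prep y d i)) ->
  exists k, Lf f v = size x + k /\ Lf f w = size y + k.
Proof.
move=> Lex H.
have equ : forall m, Dd f v (size x + m) <-> Dd f w (size y + m).
  move=> m; split=> h g g'; have [d [Hv Hw]] := H g; have [d' [Hv' Hw']] := H g'.
    by apply/(agree_prep _ Hw Hw'); apply/(agree_prep _ Hv Hv'); apply: h.
  by apply/(agree_prep _ Hv Hv'); apply/(agree_prep _ Hw Hw'); apply: h.
have hx : size x <= Lf f v.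
  apply: Lf_ge => // g g' i hi; have [d [Hv _]] := H g; have [d' [Hv' _]] := H g'.
  by rewrite Hv Hv' !(@prep_lt _ _ _ _ (d 0) hi).
exists (Lf f v - size x); rewrite subnKC //; split => //.
have [l1 l2] := Lf_spec (Lex v).
apply: Lf_eq.
  by apply/equ; rewrite subnKC.
move=> h; apply: l2; rewrite -{1}(subnKC hx) -addnS; apply/(equ _).2; by rewrite addnS.
Qed.

Lemma equiv_app (A1 A2 : Type) (f : (nat -> A1) -> (nat -> A2)) v w u :
  equiv_restr f v w -> equiv_restr f (v ++ u) (w ++ u).
Proof.
move=> [x [y H]]; exists x, y => g; have [d hd] := H (prep u g).
by exists d; rewrite !prep_cat.
Qed.

Lemma seg_equiv (A1 A2 : Type) (f : (nat -> A1) -> (nat -> A2)) c v w u :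
  (forall v, exists n, Dd f v n /\ ~ Dd f v n.+1) ->
  equiv_restr f v w -> seg f c v u = seg f c w u.
Proof.
move=> Lex hvw; have [x [y H]] := hvw; have [x' [y' H']] := equiv_app u hvw.
have H2 : forall g : nat -> A1, exists d : nat -> A2,
      (forall i, f (prep (v ++ u) g) i = prep x d i) /\
      (forall i, f (prep (w ++ u) g) i = prep y d i).
  by move=> g; have [d hd] := H (prep u g); exists d; rewrite !prep_cat.
have [k [hv hw]] := E1 Lex H; have [k' [hv' hw']] := E1 Lex H2.
rewrite /seg hv hw hv' hw' !subnDl !iotaDl -!map_comp; apply: eq_map => j /=.
have [d [Hv Hw]] := H2 c.
by rewrite Hv Hw !prep_ge.
Qed.

Lemma Lf_mono (A1 A2 : Type) (f : (nat -> A1) -> (nat -> A2)) v u :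
  (forall v, exists n, Dd f v n /\ ~ Dd f v n.+1) -> Lf f v <= Lf f (v ++ u).
Proof. move=> Lex; apply: Lf_ge => //; apply: Dd_app; exact: (Lf_spec (Lex v)).1. Qed.

Lemma seg_split (A1 A2 : Type) (f : (nat -> A1) -> (nat -> A2)) c r a u :
  (forall v, exists n, Dd f v n /\ ~ Dd f v n.+1) ->
  seg f c r (a :: u) = seg f c r [:: a] ++ seg f c (r ++ [:: a]) u.
Proof.
move=> Lex; rewrite /seg.
have e : r ++ a :: u = (r ++ [:: a]) ++ u by rewrite -catA.
have m1 := Lf_mono r [:: a] Lex; have m2 := Lf_mono (r ++ [:: a]) u Lex.
rewrite e.
have -> : Lf f ((r ++ [:: a]) ++ u) - Lf f r =
   (Lf f (r ++ [:: a]) - Lf f r) + (Lf f ((r ++ [:: a]) ++ u) - Lf f (r ++ [:: a])).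
  move: m1 m2; rewrite -catA /=; lia.
rewrite iotaD map_cat subnKC //.
congr cat; apply/eq_in_map => i; rewrite mem_iota subnKC // => /andP [_ hi].
have [l1 _] := Lf_spec (Lex (r ++ [:: a])).
have := l1 (prep u c) c i hi; rewrite -prep_cat => ->; by [].
Qed.

Lemma seg_nil (A1 A2 : Type) (f : (nat -> A1) -> (nat -> A2)) c r : seg f c r [::] = [::].
Proof. by rewrite /seg cats0 subnn. Qed.

Fixpoint pre (A : Type) (x : nat -> A) n : seq A :=
  match n with 0 => [::] | n'.+1 => x 0 :: pre (fun i => x i.+1) n' end.

Lemma size_pre (A : Type) (x : nat -> A) n : size (pre x n) = n.
Proof. by elim: n x => //= n IH x; rewrite IH. Qed.

Lemma prep_pre_lt (A : Type) (x : nat -> A) n g i : i < n -> prep (pre x n) g i = x i.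
Proof. by elim: n x i => //= n IH x [|i] //= hi; rewrite IH. Qed.

Lemma prep_pre (A : Type) (x : nat -> A) n : prep (pre x n) (fun i => x (n + i)) = x.
Proof.
apply: functional_extensionality => i.
case: (ltnP i n) => hi; first exact: prep_pre_lt.
by rewrite prep_ge' size_pre // subnKC.
Qed.

Lemma two_elems (A : finType) : 2 <= #|A| -> exists a b : A, a <> b.
Proof.
rewrite cardE; have := enum_uniq A.
case: (enum A) => [|a [|b s]] //= /andP [ha _] _; exists a, b => hab.
by move: ha; rewrite hab in_cons eqxx.
Qed.

Lemma thresh (P : nat -> Prop) B : P 0 -> ~ P B -> exists n, P n /\ ~ P n.+1.
Proof.
move=> h0; elim: B => [//|B IH] hB.
case: (classic (P B)) => hPB; first by exists B.
exact: IH.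
Qed.

Lemma forward (A1 A2 : finType) (hA1 : 2 <= #|A1|) (hA2 : 2 <= #|A2|)
    (f : (nat -> A1) -> (nat -> A2)) (hf : homeo_omega f) :
  ss_rational f ->
  exists (Q : finType) (T : transducer A1 A2 Q), nondegenerate T /\ computes T f.
Proof.
move=> [rs hrs].
have [gi [cf [cg [gf fg]]]] := hf.
have [a0 [a1 ha]] := two_elems hA1.
have [b0 [b1 hb]] := two_elems hA2.
have Lex : forall v, exists n, Dd f v n /\ ~ Dd f v n.+1.
  move=> v; have [B hB] : exists B, ~ Dd f v B.
    apply: NNPP => hno.
    have hall : forall i, f (prep v (fun _ => a0)) i = f (prep v (fun _ => a1)) i.
      move=> i; have := not_ex_all_not _ _ hno i.+1 => /NNPP h.
      exact: h.
    have e : f (prep v (fun _ => a0)) = f (prep v (fun _ => a1)).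
      exact: functional_extensionality.
    apply: ha; have := gf (prep v (fun _ => a0)) (size v).
    by rewrite e gf -[size v]addn0 !prep_ge.
  by apply: (thresh (P := Dd f v) (B := B)) => // g g' i.
set c : nat -> A1 := fun _ => a0.
have L0 : Lf f [::] = 0.
  apply: Lf_eq => [g g' i //|h]; apply: hb.
  have := h (gi (fun _ => b0)) (gi (fun _ => b1)) 0 isT.
  by rewrite /= !fg.
have hex : forall v, exists i : 'I_(size rs), equiv_restr f v (nth [::] rs i).
  move=> v; have [r hr hv] := hrs v.
  have hi : index r rs < size rs by rewrite index_mem.
  by exists (Ordinal hi); rewrite /= nth_index.
pose ridx v := proj1_sig (constructive_indefinite_description _ (hex v)).
have ridxP : forall v, equiv_restr f v (nth [::] rs (ridx v)).
  by move=> v; rewrite /ridx; case: constructive_indefinite_description.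
pose T := Transducer (ridx [::]) (fun q a => ridx (nth [::] rs q ++ [:: a]))
            (fun q a => seg f c (nth [::] rs q) [:: a]).
have run : forall n q x, run_out T q x n = seg f c (nth [::] rs q) (pre x n).
  elim=> [|n IH] q x /=; first by rewrite seg_nil.
  rewrite IH [in RHS]seg_split //=; congr (_ ++ _).
  by apply: esym; apply: seg_equiv.
have run0 : forall n x, run_out T (tr_init T) x n =
    [seq f (prep (pre x n) c) i | i <- iota 0 (Lf f (pre x n))].
  move=> n x; rewrite run /= -(seg_equiv _ _ Lex (ridxP [::])).
  by rewrite /seg L0 subn0.
exists ('I_(size rs) : finType), T; split.
  move=> x N; have [m hm] := cf x N; exists m.
  rewrite run0 size_map size_iota; apply: Lf_ge => // g g' i hi.
  have h1 := hm (prep (pre x m) g); have h2 := hm (prep (pre x m) g').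
  rewrite -(h1 _ i hi) ?(h2 _ i hi) // => j hj; by rewrite prep_pre_lt.
move=> x n i; rewrite run0 size_map size_iota => hi.
rewrite (nth_map 0) ?size_iota // nth_iota // add0n.
have [l1 _] := Lf_spec (Lex (pre x n)).
by rewrite -{2}(prep_pre x n) (l1 c (fun i => x (n + i)) i hi).
Qed.

Unset Implicit Arguments.

Theorem mainTheorem10 (A1 A2 : finType) (hA1 : 2 <= #|A1|) (hA2 : 2 <= #|A2|)
    (f : (nat -> A1) -> (nat -> A2)) (hf : homeo_omega f) :
  ss_rational f <->
  exists (Q : finType) (T : transducer A1 A2 Q), nondegenerate T /\ computes T f.
Proof.
split; first exact: forward.
by move=> [Q [T [h1 h2]]]; exact: back_dir h1 h2.
Qed.
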